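(* Work in discrete time, $t, \tau \in \{0,1,2,\dots\}$. Let $S(\tau,t)$, for integers $t \ge \tau \ge 0$, be a random process with non-negative real values and $S(t,t) = 0$ for all $t \ge 0$, and write $\mathsf{M}_S(-\theta,\tau,t) = \mathsf{E}[e^{-\theta S(\tau,t)}]$ for $\theta \ge 0$. Let $\varepsilon \in (0,1]$, $\rho \in (0,1/\varepsilon]$, and for each pair $t \ge \tau \ge 0$ let $\theta(\tau,t) > 0$ be an arbitrary (deterministic) parameter. Define $$\mathcal{S}^{\varepsilon}(\tau,t) = -\frac{1}{\theta(\tau,t)}\Bigl( \ln \mathsf{M}_S(-\theta(\tau,t),\tau,t) + \rho (t-\tau) - \ln(\rho\varepsilon)\Bigr).$$ Then for every $t \ge 0$, $$\mathsf{P}\bigl[S(\tau,t) \ge \mathcal{S}^{\varepsilon}(\tau,t) \text{ for all } \tau \in \{0,1,\dots,t\}\bigr] \ge 1-\varepsilon .$$ Consequently, if $A(t)$ and $D(t)$ are (cumulative arrival and departure) processes satisfying $D(t) \ge \inf_{\tau \in [0,t]}\{A(\tau) + S(\tau,t)\}$ for all $t \ge 0$, then $\mathsf{P}\bigl[D(t) \ge \inf_{\tau \in [0,t]}\{A(\tau) + \mathcal{S}^{\varepsilon}(\tau,t)\}\bigr] \ge 1-\varepsilon$ for all $t \ge 0$.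
   Context: $S(\tau,t)$ models the (time-variant, possibly non-stationary) service offered by a system in the interval $(\tau,t]$. $A(t)$ denotes the number of bits arriving in $(0,t]$ (non-negative, non-decreasing, $A(0)=0$) and $D(t)$ the cumulative departures. The function $\mathcal{S}^{\varepsilon}$ is called a non-stationary service curve. *)

(* Defs.v *)
From HB Require Import structures.
From mathcomp Require Import all_boot all_order all_algebra.
From mathcomp Require Import all_classical all_reals all_analysis.
Set Implicit Arguments. Unset Strict Implicit. Unset Printing Implicit Defensive.
Import Order.TTheory GRing.Theory Num.Theory.
Local Open Scope ring_scope.

(* Moment generating function M_S(-theta, tau, t) = E[exp(-theta S(tau,t))],
   as a real number (the integrand lies in (0,1], so the expectation is finite). *)
Definition mgf_neg {d} {T : measurableType d} {R : realType}
  (P : probability T R) (S : nat -> nat -> T -> R) (theta : R) (tau t : nat) : R :=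
  fine ('E_P[fun w => expR (- theta * S tau t w)])%E.

Definition ns_service_curve {d} {T : measurableType d} {R : realType}
  (P : probability T R) (S : nat -> nat -> T -> R) (theta : nat -> nat -> R)
  (eps rho : R) (tau t : nat) : R :=
  - (theta tau t)^-1 *
    (ln (mgf_neg P S (theta tau t) tau t) + rho * (t - tau)%:R - ln (rho * eps)).

Definition inf_upto {R : realType} (t : nat) (f : nat -> R) : R :=
  \big[Order.min/f 0%N]_(tau < t.+1) f tau.

(* Main.v *)
Require Import Defs.
From HB Require Import structures.
From mathcomp Require Import all_boot all_order all_algebra.
From mathcomp Require Import all_classical all_reals all_analysis.
From mathcomp Require Import measurable_realfun ring lra.
Import Order.TTheory GRing.Theory Num.Theory.
Local Open Scope ring_scope.
Local Open Scope classical_set_scope.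
Section S.
Context {d} {T : measurableType d} {R : realType} (P : probability T R).

Lemma E01 (Y : T -> R) : measurable_fun setT Y -> (forall w, 0 <= Y w <= 1) ->
  ('E_P[Y] = (fine 'E_P[Y])%:E /\ (0 <= fine 'E_P[Y] <= 1)%R)%E.
Proof.
move=> mY Y01.
have h0 : (0 <= 'E_P[Y])%E by apply: expectation_ge0 => w; have /andP[] := Y01 w.
have h1 : ('E_P[Y] <= 1)%E.
  rewrite -(expectation_cst P 1) unlock; apply: ge0_le_integral => //. all: try (move=> w _; rewrite lee_fin; have /andP[] := Y01 w; done).
  - exact/measurable_EFinP.
  - exact/measurable_EFinP.
have fE : ('E_P[Y] \is a fin_num)%E by rewrite ge0_fin_numE // (le_lt_trans h1) ?ltry.
split; first by rewrite fineK.
by rewrite fine_ge0 //= -lee_fin fineK.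
Qed.

Lemma markovY (Y : T -> R) (c : R) : measurable_fun setT Y -> (forall w, 0 <= Y w) ->
  0 < c -> (c%:E * P [set w | (c <= Y w)%R] <= 'E_P[Y])%E.
Proof.
move=> mY Y0 c0.
have H := @le_integral_comp_abse _ T R P setT measurableT (EFin \o Y) c id
  (@measurable_id _ _ setT) (fun r h => h) (fun x y _ _ h => h)
  (proj2 (measurable_EFinP _ _) mY) c0.
have E : setT `&` [set x | (c%:E <= `|(EFin \o Y) x|)%E] = [set w | (c <= Y w)%R].
  by rewrite setTI; apply/seteqP; split => w /=; rewrite ger0_norm ?lee_fin.
rewrite E in H; apply: le_trans H _.
rewrite unlock; apply: ge0_le_integral => //=.
- apply/measurable_EFinP; exact: measurableT_comp.
- exact/measurable_EFinP.
- by move=> w _; rewrite ger0_norm.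
Qed.
Lemma mset (f : T -> bool) : measurable_fun setT f -> measurable [set w | f w].
Proof.
move=> mf; have := mf measurableT [set true] I.
by rewrite setTI; congr measurable; apply/seteqP; split => w /=.
Qed.
Lemma mlt (f g : T -> R) : measurable_fun setT f -> measurable_fun setT g ->
  measurable [set w | f w < g w].
Proof. by move=> mf mg; apply: mset; exact: measurable_fun_ltr. Qed.
Lemma mle (f g : T -> R) : measurable_fun setT f -> measurable_fun setT g ->
  measurable [set w | f w <= g w].
Proof. by move=> mf mg; apply: mset; exact: measurable_fun_ler. Qed.
Lemma mexp (f : T -> R) (a : R) : measurable_fun setT f ->
  measurable_fun setT (fun w => expR (a * f w)).
Proof.
move=> mf; apply: measurableT_comp; first exact: measurable_expR.
exact: measurable_funM.
Qed.

Lemma tail (S : nat -> nat -> T -> R) (theta : nat -> nat -> R) (eps rho : R)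
  (tau t : nat) : (tau <= t)%N ->
  measurable_fun setT (S tau t) -> (forall w, 0 <= S tau t w) ->
  0 < theta tau t -> 0 < rho * eps ->
  (P [set w | (S tau t w < ns_service_curve P S theta eps rho tau t)%R] <=
   (rho * eps * expR (- rho * (t - tau)%:R))%:E)%E.
Proof.
move=> le mS S0 th0 re0.
set x := ns_service_curve _ _ _ _ _ _ _.
set th := theta tau t.
pose Y w := expR (- th * S tau t w).
have mY : measurable_fun setT Y by exact: mexp.
have Y01 : forall w, 0 <= Y w <= 1.
  move=> w; rewrite expR_ge0 /= -expR0 ler_expR mulNr oppr_le0.
  by rewrite mulr_ge0 // ltW.
have [EE /andP[M0 M1]] := E01 Y mY Y01.
set c := expR (- th * x).
have c0 : 0 < c by exact: expR_gt0.
have sub : [set w | (S tau t w < x)%R] `<=` [set w | (c <= Y w)%R].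
  move=> w /= h; rewrite /c /Y ler_expR !mulNr lerN2 ler_pM2l //; exact: ltW.
have := markovY Y c mY (fun w => proj1 (andP (Y01 w))) c0.
rewrite EE => mk.
apply: (le_trans (le_measure _ _ _ sub)).
- by rewrite inE; apply: mlt => //; exact: measurable_cst.
- by rewrite inE; apply: mle => //; exact: measurable_cst.
have : (P [set w | (c <= Y w)%R] <= (fine 'E_P[Y] / c)%:E)%E.
  by rewrite EFinM lee_pdivlMr // muleC.
move=> h; apply: (le_trans h); rewrite lee_fin.
have hc : c = expR (ln (fine 'E_P[Y]) + rho * (t - tau)%:R - ln (rho * eps)).
  by rewrite /c /x /ns_service_curve /mgf_neg -/th mulrA mulrNN mulfV ?gt_eqF // mul1r.
rewrite hc; move: M0 M1; set M := fine _ => M0 M1.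
have [->|Mpos] := eqVneq M 0.
  by rewrite mul0r mulr_ge0 ?expR_ge0 // ltW.
have Mp : 0 < M by rewrite lt0r Mpos.
rewrite -expRN !opprD opprK !expRD expRN lnK ?posrE //.
rewrite lnK ?posrE // !mulrA mulfV ?gt_eqF // mul1r mulrC mulNr. 
  by rewrite [_ * rho]mulrC mulrA [eps * rho]mulrC.
Qed.
End S.

Section G.
Context {R : realType}.
Lemma geo_rec (rho : R) (t : nat) :
  (1 - expR (- rho)) * \sum_(tau < t) expR (- rho * (t - tau)%:R) <= expR (- rho).
Proof.
elim: t => [|t IH]; first by rewrite big_ord0 mulr0 expR_ge0.
rewrite big_ord_recr /= subSnn mulr1.
have -> : \sum_(i < t) expR (- rho * (t.+1 - i)%:R) =
          expR (- rho) * \sum_(i < t) expR (- rho * (t - i)%:R).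
  rewrite mulr_sumr; apply: eq_bigr => i _ /=.
  rewrite subSn; last exact: ltnW (ltn_ord i).
  by rewrite -[(t - i).+1]addn1 natrD mulrDr mulr1 expRD mulrC.
set g := \sum_(i < t) _ in IH *; set q := expR (- rho) in IH *.
have q0 : 0 <= q by exact: expR_ge0.
have H := ler_wpM2l q0 IH.
have -> : (1 - q) * (q * g + q) = q * ((1 - q) * g) + (q - q * q) by ring.
by apply: le_trans (lerD H (lexx _)) _; rewrite addrC subrK.
Qed.
Lemma geo (rho : R) (t : nat) : 0 < rho ->
  rho * \sum_(tau < t) expR (- rho * (t - tau)%:R) <= 1.
Proof.
move=> r0; have h1 := geo_rec rho t.
set g := \sum_(i < t) _ in h1 *; set q := expR (- rho) in h1 *.
have h2 : rho * q <= 1 - q.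
  have := expR_ge1Dx rho; rewrite /q expRN => h.
  have ep : 0 < expR rho by exact: expR_gt0.
  rewrite -(ler_pM2r ep) mulrBl mul1r divfK ?gt_eqF // mulVf ?gt_eqF //.
  lra.
have q1 : q < 1 by rewrite /q expR_lt1 oppr_lt0.
have g0 : 0 <= g by apply: sumr_ge0 => i _; exact: expR_ge0.
have q2 : 0 < 1 - q by rewrite subr_gt0.
rewrite -(ler_pM2l q2) mulr1.
have H := ler_wpM2l (ltW r0) h1.
have -> : (1 - q) * (rho * g) = rho * ((1 - q) * g) by ring.
exact: le_trans H h2.
Qed.
End G.

Section M.
Context {d} {T : measurableType d} {R : realType}.
Lemma inf_mono (t : nat) (f g : nat -> R) :
  (forall tau, (tau <= t)%N -> f tau <= g tau) -> inf_upto t f <= inf_upto t g.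
Proof.
move=> fg; rewrite /inf_upto; apply: le_bigmin.
  apply: le_trans (fg 0%N (leq0n _)).
  exact: (bigmin_le _ (ord0 : 'I_t.+1)).
move=> i _; apply: le_trans (fg i (ltn_ord i)).
exact: bigmin_le.
Qed.

Lemma meas_big (I : Type) (r : seq I) (g : T -> R) (F : I -> T -> R) :
  measurable_fun setT g -> (forall i, measurable_fun setT (F i)) ->
  measurable_fun setT (fun w => \big[Order.min/g w]_(i <- r) F i w).
Proof.
move=> mg mF; elim: r => [|i r IH].
  by under eq_fun do rewrite big_nil.
under eq_fun do rewrite big_cons.
exact: (measurable_minr (mF i) IH).
Qed.

Lemma meas_inf (t : nat) (F : nat -> T -> R) :
  (forall tau, measurable_fun setT (F tau)) ->
  measurable_fun setT (fun w => inf_upto t (fun tau => F tau w)).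
Proof.
move=> mF; exact (@meas_big _ (index_enum 'I_t.+1) _ _ (mF 0%N) (fun i => mF (nat_of_ord i))).
Qed.
End M.

Lemma part1 (d : measure_display) (T : measurableType d) (R : realType)
  (P : probability T R) (S : nat -> nat -> T -> R)
  (HSmeas : forall tau t : nat, (tau <= t)%N -> measurable_fun setT (S tau t))
  (HSnn : forall (tau t : nat) (w : T), (tau <= t)%N -> 0 <= S tau t w)
  (HS0 : forall (t : nat) (w : T), S t t w = 0)
  (eps rho : R) (Heps : 0 < eps <= 1) (Hrho : 0 < rho <= eps^-1)
  (theta : nat -> nat -> R)
  (Htheta : forall tau t : nat, (tau <= t)%N -> 0 < theta tau t) (t : nat) :
  measurable [set w | forall tau : nat, (tau <= t)%N ->
                   (ns_service_curve P S theta eps rho tau t <= S tau t w)%R] /\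
  ((1 - eps)%:E <=
      P [set w | forall tau : nat, (tau <= t)%N ->
                   (ns_service_curve P S theta eps rho tau t <= S tau t w)%R])%E.
Proof.
case/andP: Heps => e0 e1; case/andP: Hrho => r0 r1.
have re0 : 0 < rho * eps by exact: mulr_gt0.
have re1 : rho * eps <= 1.
  by rewrite -(mulVf (lt0r_neq0 e0)) ler_pM2r.
set x := fun tau => ns_service_curve P S theta eps rho tau t.
pose f tau := rho * eps * expR (- rho * (t - tau)%:R).
pose bad n := [set w | exists2 tau, (tau < n)%N & (S tau t w < x tau)%R].
have Hb : forall n, (n <= t)%N ->
  measurable (bad n) /\ (P (bad n) <= (\sum_(tau < n) f tau)%:E)%E.
  elim => [|n IH] hn.
    have -> : bad 0%N = set0 by apply/seteqP; split => w //= [].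
    by rewrite measure0 big_ord0.
  have [mb Pb] := IH (ltnW hn).
  have ms : measurable [set w | (S n t w < x n)%R].
    by apply: mlt; [exact: HSmeas (ltnW hn)|exact: measurable_cst].
  have -> : bad n.+1 = bad n `|` [set w | (S n t w < x n)%R].
    apply/seteqP; split => w /=.
      case=> tau; rewrite ltnS leq_eqVlt => /orP[/eqP ->|]; first by right.
      by move=> h1 h2; left; exists tau.
    by case=> [[tau h1 h2]|h]; [exists tau => //; exact: ltnW|exists n].
  split; first exact: measurableU.
  apply: (le_trans (measureU2 _ mb ms)).
  rewrite big_ord_recr /= EFinD; apply: leeD => //.
  apply: tail => //; first exact: ltnW.
  - exact: HSmeas (ltnW hn).
  - by move=> w; apply: HSnn; exact: ltnW.
  - by apply: Htheta; exact: ltnW.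
have [mb Pb] := Hb t (leqnn t).
have xt : x t <= 0.
  rewrite /x /ns_service_curve /mgf_neg.
  have -> : (fun w => expR (- theta t t * S t t w)) = cst 1.
    by apply: funext => w; rewrite HS0 mulr0 expR0.
  rewrite expectation_cst /= ln1 subnn mulr0 add0r sub0r mulrNN.
  rewrite pmulr_rle0 ?invr_gt0 ?Htheta //; exact: ln_le0.
have -> : [set w | forall tau : nat, (tau <= t)%N -> (x tau <= S tau t w)%R] = ~` bad t.
  apply/seteqP; split => w /=.
    by move=> h [tau h1 h2]; move: (h tau (ltnW h1)); rewrite leNgt h2.
  move=> h tau; rewrite leq_eqVlt => /orP[/eqP ->|h1]; first by rewrite HS0.
  by rewrite leNgt; apply/negP => h2; apply: h; exists tau.
split; first exact: measurableC.
rewrite probability_setC // EFinB; apply: leeB => //.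
apply: le_trans Pb _; rewrite lee_fin.
rewrite /f -mulr_sumr mulrC mulrA -[leRHS]mul1r; apply: ler_wpM2r; first exact: ltW.
by rewrite mulrC; exact: geo.
Qed.

Theorem mainTheorem3 (d : measure_display) (T : measurableType d) (R : realType)
  (P : probability T R) (S : nat -> nat -> T -> R)
  (HSmeas : forall tau t : nat, (tau <= t)%N -> measurable_fun setT (S tau t))
  (HSnn : forall (tau t : nat) (w : T), (tau <= t)%N -> 0 <= S tau t w)
  (HS0 : forall (t : nat) (w : T), S t t w = 0)
  (eps rho : R) (Heps : 0 < eps <= 1) (Hrho : 0 < rho <= eps^-1)
  (theta : nat -> nat -> R)
  (Htheta : forall tau t : nat, (tau <= t)%N -> 0 < theta tau t) :
  (forall t : nat,
     ((1 - eps)%:E <=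
      P [set w | forall tau : nat, (tau <= t)%N ->
                   (ns_service_curve P S theta eps rho tau t <= S tau t w)%R])%E)
  /\
  (forall A D : nat -> T -> R,
     (forall t : nat, measurable_fun setT (A t)) ->
     (forall t : nat, measurable_fun setT (D t)) ->
     (forall w : T, A 0%N w = 0) ->
     (forall (t : nat) (w : T), 0 <= A t w) ->
     (forall (s t : nat) (w : T), (s <= t)%N -> A s w <= A t w) ->
     (forall (t : nat) (w : T), inf_upto t (fun tau => A tau w + S tau t w) <= D t w) ->
     forall t : nat,
       ((1 - eps)%:E <=
        P [set w | (inf_upto t (fun tau => A tau w + ns_service_curve P S theta eps rho tau t)
                   <= D t w)%R])%E).
Proof.
split.
  by move=> t; have [_ h] := @part1 _ _ _ P S HSmeas HSnn HS0 eps rho Heps Hrho theta Htheta t.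
move=> A D mA mD _ _ _ HD t.
have [mG PG] := @part1 _ _ _ P S HSmeas HSnn HS0 eps rho Heps Hrho theta Htheta t.
apply: le_trans PG _; apply: le_measure; rewrite ?inE //.
- apply: mle; last exact: mD.
  apply: (meas_inf t (fun tau w => A tau w + ns_service_curve P S theta eps rho tau t)).
  by move=> tau; apply: measurable_funD => //; exact: measurable_cst.
- move=> w /= hw; apply: le_trans (HD t w).
  by apply: inf_mono => tau htau; rewrite lerD2l; exact: hw.
Qed.
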